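(* Let $(M,\|\cdot\|)$ be a normed space, $d(x,y)=\|x-y\|$, with size notion $s(x)=\|x\|$. Then $\mathrm{AH}_d$ is a pseudo-metric on $\mathcal{P}(M)$ (reflexive, symmetric, and satisfying the triangle inequality).
   Context: For $X,Y\subseteq M$, \[ \overrightarrow{\mathrm{AH}}_{d}(X,Y)=\lim_{k\to\infty}\ \sup_{x\in X,\ \|x\|\ge k}\ \inf_{y\in Y} \|x-y\|,\qquad \mathrm{AH}_d(X,Y)=\max\{\overrightarrow{\mathrm{AH}}_{d}(X,Y),\overrightarrow{\mathrm{AH}}_{d}(Y,X)\}, \] with the supremum over the empty set equal to $0$ and values in $[0,+\infty]$ (the infimum over the empty set being $+\infty=\sup d$ when $M\neq\{0\}$). *)

(* Defs.v *)
From HB Require Import structures.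
From mathcomp Require Import all_boot all_order all_algebra.
From mathcomp Require Import all_classical all_reals all_analysis.
Set Implicit Arguments. Unset Strict Implicit. Unset Printing Implicit Defensive.
Import Order.TTheory GRing.Theory Num.Theory.
Import numFieldNormedType.Exports.
Local Open Scope classical_set_scope.
Local Open Scope ring_scope.
Local Open Scope ereal_scope.

Section AH.
Variables (R : realType) (M : normedModType R).

Definition dist_pt (x y : M) : \bar R := (`|x - y|)%:E.

(* inf_{y in Y} d(x,y); the infimum over the empty set is +oo *)
Definition dist_set (x : M) (Y : set M) : \bar R :=
  ereal_inf [set dist_pt x y | y in Y].

(* sup_{x in X, ||x|| >= k} inf_{y in Y} d(x,y), with sup over the empty set = 0 *)
Definition AH_tail (X Y : set M) (k : R) : \bar R :=
  ereal_sup ([set dist_set x Y | x in [set x | x \in X /\ (k <= `|x|)%R]]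
             `|` [set 0]).

Definition AH_dir (X Y : set M) : \bar R :=
  lim (AH_tail X Y k @[k --> +oo%R]).

Definition AH (X Y : set M) : \bar R := maxe (AH_dir X Y) (AH_dir Y X).

End AH.

(* Main.v *)
Require Import Defs.
From HB Require Import structures.
From mathcomp Require Import all_boot all_order all_algebra.
From mathcomp Require Import all_classical all_reals all_analysis.
Import Order.TTheory GRing.Theory Num.Theory.
Local Open Scope classical_set_scope.
Local Open Scope ereal_scope.

Section Proofs.
Variables (R : realType) (M : normedModType R).
Implicit Types X Y Z : set M.

Lemma dist_set_ge0 (x : M) Y : 0 <= dist_set x Y.
Proof.
apply/ereal_infP => _ [y _ <-]; rewrite /dist_pt lee_fin; exact: normr_ge0.
Qed.

Lemma AH_tail_ge0 X Y k : 0 <= AH_tail X Y k.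
Proof. by apply: ereal_sup_ubound; right. Qed.

Lemma dist_set_le_tail X Y k (x : M) : X x -> (k <= `|x|)%R ->
  dist_set x Y <= AH_tail X Y k.
Proof.
move=> Xx kx; apply: ereal_sup_ubound; left; exists x => //.
by split => //; rewrite in_setE.
Qed.

Lemma AH_dir_inf X Y : AH_dir X Y = ereal_inf (range (AH_tail X Y)).
Proof.
apply: (cvg_lim (@ereal_hausdorff R)).
apply: nonincreasing_cvge => a b ab.
apply: ereal_sup_le => z [[x [Xx bx] <-]|->]; last by right.
by left; exists x => //; split => //; apply: le_trans bx.
Qed.

Lemma AH_dir_ge0 X Y : 0 <= AH_dir X Y.
Proof.
rewrite AH_dir_inf; apply/ereal_infP => _ [k _ <-]; exact: AH_tail_ge0.
Qed.

Lemma AH_dir_le X Y k : AH_dir X Y <= AH_tail X Y k.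
Proof. rewrite AH_dir_inf; apply: ereal_inf_lbound; by exists k. Qed.

Lemma AH_dir_self X : AH_dir X X = 0.
Proof.
apply/eqP; rewrite eq_le AH_dir_ge0 andbT.
apply: le_trans (AH_dir_le X X 0%R) _.
apply/ereal_supP => _ [[x [Xx _] <-]|->] //.
rewrite in_setE in Xx.
apply: ereal_inf_lbound; exists x => //; by rewrite /dist_pt subrr normr0.
Qed.

Lemma AH_dir_tri X Y Z : AH_dir X Z <= AH_dir X Y + AH_dir Y Z.
Proof.
have a0 := AH_dir_ge0 X Y; have b0 := AH_dir_ge0 Y Z.
case Ea : (AH_dir X Y) a0 => [ra| |] // a0'; last first.
  by rewrite addye ?leey //; apply/negP => /eqP E; rewrite E in b0.
case Eb : (AH_dir Y Z) b0 => [rb| |] // b0'; last by rewrite addey ?leey.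
rewrite lee_fin in a0'; rewrite lee_fin in b0'.
apply/lee_addgt0Pr => e e0.
set eps := (e / 2)%R.
have eps0 : (0 < eps)%R by rewrite divr_gt0.
have [k1 k1P] : exists k1, AH_tail X Y k1 < (ra + eps)%:E.
  have : ereal_inf (range (AH_tail X Y)) < (ra + eps)%:E.
    by rewrite -AH_dir_inf Ea lte_fin ltrDl.
  by move=> /ereal_inf_lt [_ [k _ <-] h]; exists k.
have [k2 k2P] : exists k2, AH_tail Y Z k2 < (rb + eps)%:E.
  have : ereal_inf (range (AH_tail Y Z)) < (rb + eps)%:E.
    by rewrite -AH_dir_inf Eb lte_fin ltrDl.
  by move=> /ereal_inf_lt [_ [k _ <-] h]; exists k.
set K := Num.max k1 (k2 + (ra + eps))%R.
have hK1 : (k1 <= K)%R by rewrite /K le_max lexx.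
have hK2 : (k2 + (ra + eps) <= K)%R by rewrite /K le_max lexx orbT.
apply: le_trans (AH_dir_le X Z K) _.
apply/ereal_supP => _ [[x [Xx Kx] <-]|->]; last first.
  by rewrite -EFinD lee_fin; apply: addr_ge0 => //; [exact: addr_ge0|exact: ltW].
rewrite in_setE in Xx.
have := le_lt_trans (@dist_set_le_tail X Y _ _ Xx (le_trans hK1 Kx)) k1P.
move=> /ereal_inf_lt [_ [y Yy <-]]; rewrite /dist_pt lte_fin => xy.
have k2y : (k2 <= `|y|)%R.
  have h1 : (k2 + (ra + eps) <= `|x|)%R := le_trans hK2 Kx.
  have h2 : (`|x| <= `|x - y| + `|y|)%R.
    by rewrite -{1}(subrK y x); exact: ler_normD.
  rewrite -(lerD2r (ra + eps)%R); apply: le_trans h1 _.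
  by rewrite addrC; apply: le_trans h2 _; rewrite lerD2r ltW.
have := le_lt_trans (@dist_set_le_tail Y Z _ _ Yy k2y) k2P.
move=> /ereal_inf_lt [_ [z Zz <-]]; rewrite /dist_pt lte_fin => yz.
apply: (@le_trans _ _ (dist_pt x z)); first by apply: ereal_inf_lbound; exists z.
rewrite /dist_pt -!EFinD lee_fin.
have -> : (x - z = (x - y) + (y - z))%R by rewrite addrA subrK.
apply: le_trans (ler_normD _ _) _.
have -> : (e = eps + eps)%R by rewrite /eps -splitr.
have := ltrD xy yz; move=> /ltW h; apply: le_trans h _.
by rewrite addrACA.
Qed.

End Proofs.

Theorem mainTheorem4 (R : realType) (M : normedModType R) :
  (forall X : set M, AH X X = 0) /\
  (forall X Y : set M, AH X Y = AH Y X) /\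
  (forall X Y Z : set M, AH X Z <= AH X Y + AH Y Z).
Proof.
split; [|split].
- by move=> X; rewrite /AH AH_dir_self maxxx.
- by move=> X Y; rewrite /AH maxC.
- move=> X Y Z; rewrite /AH ge_max; apply/andP; split.
  + apply: (le_trans (AH_dir_tri _ _ X Y Z)).
    by apply: leeD; rewrite le_max lexx ?orbT.
  + apply: (le_trans (AH_dir_tri _ _ Z Y X)).
    by rewrite addeC; apply: leeD; rewrite le_max lexx ?orbT.
Qed.
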